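(* Consider the CTMDP primitives $\{S,A,q,c\}$ described in the context, assume $\bar c(x):=\sup_{a\in A}c(x,a)<\infty$ for all $x\in S$, and let $w$ be a $[1,\infty)$-valued Borel function on $S$ with $w(x)\ge1+\bar c(x)+\bar q_x$ for all $x\in S$. Define the stochastic kernel $\tilde p(dy|x,a):=\frac{q(dy|x,a)}{w(x)}+\delta_{\{x\}}(dy)$ on $\mathcal B(S)$ given $(x,a)\in S\times A$. Then: (a) A $[1,\infty]$-valued lower semianalytic function $V$ on $S$ satisfies $$0=\inf_{a\in A}\left\{c(x,a)V(x)+\int_S q(dy|x,a)V(y)\right\}\qquad(\ast)$$ for each $x\in S$ with $V(x)<\infty$ if and only if $$V(x)=\inf_{a\in A}\left\{\frac{w(x)}{w(x)-c(x,a)}\int_S\tilde p(dy|x,a)V(y)\right\},\quad\forall x\in S.$$ (b) Let $V$ be a $[1,\infty]$-valued lower semianalytic function on $S$ satisfying $(\ast)$ for each $x\in S$ with $V(x)<\infty$. A deterministic stationary policy (measurable map) $\varphi:S\to A$ satisfies $$0=\inf_{a\in A}\left\{c(x,a)V(x)+\int_S q(dy|x,a)V(y)\right\}=c(x,\varphi(x))V(x)+\int_S q(dy|x,\varphi(x))V(y)$$ for each $x\in S$ with $V(x)<\infty$ if and only if $$\inf_{a\in A}\left\{\frac{w(x)}{w(x)-c(x,a)}\int_S\tilde p(dy|x,a)V(y)\right\}=\frac{w(x)}{w(x)-c(x,\varphi(x))}\int_S\tilde p(dy|x,\varphi(x))V(y),\quad\forall x\in S.$$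
   Context: $S$, $A$ are nonempty Borel spaces. The transition rate $q(dy|x,a)$ is a signed kernel on $\mathcal B(S)$ given $(x,a)\in S\times A$ with $q(\Gamma\setminus\{x\}|x,a)\ge0$ for all $\Gamma\in\mathcal B(S)$, $q(S|x,a)=0$, and $\bar q_x:=\sup_{a\in A}q_x(a)<\infty$, where $q_x(a):=-q(\{x\}|x,a)$. The cost rate $c:S\times A\to[0,\infty)$ is measurable. Conventions: $0/0=0$, $0\cdot\infty=0$, $1/0=+\infty$, $\infty-\infty=\infty$. *)

(* Defs.v *)
From HB Require Import structures.
From mathcomp Require Import all_boot all_order all_algebra.
From mathcomp Require Import all_classical all_reals all_analysis.
From mathcomp Require Import measurable_realfun lebesgue_integral charge.
Set Implicit Arguments. Unset Strict Implicit. Unset Printing Implicit Defensive.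
Import Order.TTheory GRing.Theory Num.Theory.
Import numFieldNormedType.Exports.
Local Open Scope classical_set_scope.
Local Open Scope ring_scope.
Local Open Scope ereal_scope.

(** Baire space N^N with its Borel sigma-algebra, generated by the cylinders
    [set g | g n = k]. *)
Definition baire_cyl : set (set (nat -> nat)) :=
  fun C => exists n k : nat, C = [set g : nat -> nat | g n = k].
Definition baire_borel : set (set (nat -> nat)) := <<s baire_cyl >>.

(** Borel space (= standard Borel space): Borel-isomorphic to a Borel subset
    of the Baire space. *)
Definition borel_space d (T : measurableType d) : Prop :=
  exists (B : set (nat -> nat)) (f : T -> nat -> nat) (g : (nat -> nat) -> T),
    baire_borel B /\ (forall x, B (f x)) /\ (forall x, g (f x) = x) /\
    (forall y, B y -> f (g y) = y) /\
    (forall C, baire_borel C -> measurable (f @^-1` C)) /\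
    (forall D, measurable D -> baire_borel (f @` D)).

Definition analytic d (T : measurableType d) (E : set T) : Prop :=
  E = set0 \/ exists f : (nat -> nat) -> T,
    (forall D, measurable D -> baire_borel (f @^-1` D)) /\ E = range f.

Definition lower_semianalytic d (T : measurableType d) (R : realType)
  (V : T -> \bar R) : Prop :=
  forall r : R, analytic [set x | V x < r%:E].

(** Integral of f against the (nonnegative) measure whose values on measurable
    sets are given by the set function m (0 if there is no such measure). *)
Definition int_wrt d (T : measurableType d) (R : realType)
  (m : set T -> \bar R) (f : T -> \bar R) : \bar R :=
  match pselect (exists mu : {measure set T -> \bar R},
                   forall G, measurable G -> mu G = m G) with
  | left H => \int[projT1 (cid H)]_y f y
  | right _ => 0
  end.

Section CTMDP.
Context {d1 d2 : measure_display} {S : measurableType d1}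
  {A : measurableType d2} {R : realType}.
Variable q : S -> A -> {charge set S -> \bar R}.

Definition qx (x : S) (a : A) : \bar R := - q x a [set x].

(** int_S q(dy|x,a) V(y) := int_{S\{x}} V(y) q(dy|x,a) - q_x(a) V(x),
    with the convention oo - oo = oo (dual addition). *)
Definition qint (x : S) (a : A) (V : S -> \bar R) : \bar R :=
  dual_adde (int_wrt (fun G => q x a (G `\ x)) V) (- (qx x a * V x)).

Definition ptint (w : S -> R) (x : S) (a : A) (V : S -> \bar R) : \bar R :=
  int_wrt (fun G => q x a G * ((w x)^-1)%:E + \d_x G) V.
End CTMDP.

(* Main.v *)
Require Import Defs.
From HB Require Import structures.
From mathcomp Require Import all_boot all_order all_algebra.
From mathcomp Require Import all_classical all_reals all_analysis.
From mathcomp Require Import measurable_realfun lebesgue_integral charge.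
Import Order.TTheory GRing.Theory Num.Theory.
Import numFieldNormedType.Exports.
Local Open Scope classical_set_scope.
Local Open Scope ring_scope.
Local Open Scope ereal_scope.
From mathcomp Require Import ring lra.
Lemma baire_point (h : nat -> nat) : baire_borel [set h].
Proof.
have := @smallest_sigma_algebra _ setT baire_cyl.
rewrite /sigma_algebra => -[s0 sC sU].
have cyl n : baire_borel [set g : nat -> nat | g n = h n].
  by apply: sub_gen_smallest; exists n, (h n).
have -> : [set h] = setT `\` \bigcup_n (setT `\` [set g : nat -> nat | g n = h n]).
  apply/seteqP; split => g /=.
    move=> ->; split => //; case=> n _ /=; by case.
  case=> _ H; apply/funext => n; apply: contrapT => gn; apply: H; exists n => //.
exact: (sC _ (sU _ (fun n => sC _ (cyl n)))).
Qed.

Lemma borel_point d (T : measurableType d) (hT : borel_space T) (x : T) :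
  measurable [set x].
Proof.
case: hT => B [f [g [_ [_ [gf [_ [mf _]]]]]]].
have -> : [set x] = f @^-1` [set f x].
  apply/seteqP; split => y /=; first by move->.
  by move=> e; rewrite -(gf y) e gf.
exact: mf (baire_point _).
Qed.
Definition pmeas d (T : measurableType d) (R : realType)
  (nu : {charge set T -> \bar R}) & (forall X, measurable X -> 0 <= nu X) :=
  fun X => Order.max (nu X) 0.
Arguments pmeas {d T R nu}.
Section pmeas.
Context d (T : measurableType d) (R : realType).
Variable nu : {charge set T -> \bar R}.
Hypothesis nu0 : forall X, measurable X -> 0 <= nu X.

Local Notation pm := (pmeas nu0).

Lemma pmeasE X : measurable X -> pm X = nu X.
Proof. by move=> mX; rewrite /pmeas max_l// nu0. Qed.

Let pmeas0 : pm set0 = 0.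
Proof. by rewrite pmeasE// charge0. Qed.

Let pmeas_ge0 X : 0 <= pm X.
Proof. by rewrite /pmeas le_max lexx orbT. Qed.

Let pmeas_sa : semi_sigma_additive pm.
Proof.
move=> F mF tF mU.
rewrite pmeasE//.
under eq_fun do under eq_bigr do rewrite pmeasE//.
exact: charge_semi_sigma_additive.
Qed.

HB.instance Definition _ := isMeasure.Build _ T R pm
  pmeas0 pmeas_ge0 pmeas_sa.
End pmeas.

Lemma int_wrt_eq d (T : measurableType d) (R : realType)
  (mu : {measure set T -> \bar R}) (m : set T -> \bar R) (f : T -> \bar R) :
  (forall G, measurable G -> mu G = m G) -> int_wrt m f = \int[mu]_y f y.
Proof.
move=> H; rewrite /int_wrt; case: pselect => [H'|[]]; last by exists mu.
apply: eq_measure_integral => G mG _.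
by case: (cid H') => /= mu' ->; rewrite ?H.
Qed.
Import HBNNSimple.

Lemma int_mix d (T : measurableType d) (R : realType)
  (mu : {measure set T -> \bar R}) (x0 : T) (mx : measurable [set x0])
  (k m : {nonneg R}) (kpos : (0 < k%:num)%R) (mpos : (0 < m%:num)%R)
  (f : T -> \bar R) (f0 : forall y, 0 <= f y) :
  integral (measure_add (mscale k mu) (mscale m \d_x0)) setT f
  = (k%:num)%:E * integral mu setT f + (m%:num)%:E * f x0.
Proof.
rewrite !ge0_integralTE//.
pose mix := measure_add (mscale k mu) (mscale m \d_x0).
have iE (nu : {measure set T -> \bar R}) (h : {nnsfun T >-> R}) :
    sintegral nu h = \int[nu]_y (h y)%:E.
  by rewrite integral_nnsfun// patch_setT.
have mh (h : {nnsfun T >-> R}) : measurable_fun setT (fun y => (h y)%:E).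
  exact/measurable_EFinP.
have h0 (h : {nnsfun T >-> R}) y : setT y -> 0 <= (h y)%:E.
  by move=> _; rewrite lee_fin.
have sint_mix (h : {nnsfun T >-> R}) :
    sintegral mix h = (k%:num)%:E * sintegral mu h + (m%:num)%:E * (h x0)%:E.
  rewrite !iE (ge0_integral_measure_add _ _ measurableT (h0 h) (mh h)).
  rewrite !(ge0_integral_mscale _ measurableT _ (mh h) (h0 h)).
  by rewrite (integral_dirac x0 measurableT (mh h)) diracE in_setT mul1e.
set P := (X in X = _).
apply/eqP; rewrite eq_le; apply/andP; split.
  apply: ge_ereal_sup => _ [h /= hf <-]; rewrite sint_mix; apply: leeD.
    by apply: lee_wpmul2l => //; apply: ereal_sup_ubound; exists h.
  by apply: lee_wpmul2l => //.
have claim (h : {nnsfun T >-> R}) (hf : forall y, (h y)%:E <= f y) (t : R)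
    (t0 : (0 <= t)%R) (tf : t%:E <= f x0) :
    (k%:num)%:E * sintegral mu h + (m%:num)%:E * t%:E <= P.
  pose g := max_nnsfun h (scale_nnsfun (indic_nnsfun R mx) t0).
  have gE y : g y = Order.max (h y) (t * (\1_[set x0] y))%R by [].
  have gf y : (g y)%:E <= f y.
    rewrite gE; have [->|yx] := eqVneq y x0.
      by rewrite indicE mem_set// mulr1 EFin_max ge_max hf.
    by rewrite indicE memNset ?mulr0 ?EFin_max ?ge_max ?hf ?f0//; exact/eqP.
  have : sintegral mix g <= P by apply: ereal_sup_ubound; exists g.
  apply: le_trans; rewrite sint_mix; apply: leeD.
    apply: lee_wpmul2l => //; apply: le_sintegral => y.
    by rewrite gE le_max lexx.
  apply: lee_wpmul2l => //; rewrite lee_fin gE indicE mem_set// mulr1.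
  by rewrite le_max lexx orbT.
have P0 : 0 <= P.
  by apply: le_trans (claim (nnsfun0) _ 0%R (lexx _) (f0 _)) => //; 
   rewrite mule0 adde0 mule_ge0// sintegral_ge0.
clearbody P; case: P claim P0 => [p| |] claim P0; last 2 first.
- by rewrite leey.
- by [].
case fv : (f x0) => [v| |]; last 2 first.
- have p0 : (0 <= p)%R by rewrite -lee_fin.
  have t0 : (0 <= p / m%:num + 1)%R by rewrite addr_ge0// divr_ge0.
  have tf : (p / m%:num + 1)%:E <= f x0 by rewrite fv leey.
  have H := claim nnsfun0 (fun y => f0 y) _ t0 tf.
  have : ((m%:num) * (p / m%:num + 1))%:E <= p%:E.
    apply: le_trans H; rewrite EFinM -[X in X <= _]add0e; apply: leeD => //.
    by rewrite mule_ge0// sintegral_ge0.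
  rewrite lee_fin mulrDr mulr1 [(_ * (p / _))%R]mulrC divfK ?gt_eqF//.
  by rewrite gerDl leNgt mpos.
- by have := f0 x0; rewrite fv.
have hv : (0 <= v)%R by rewrite -lee_fin -fv f0.
have cl h hf := claim h hf v hv ltac:(by rewrite fv).
have Qle : ereal_sup [set sintegral mu h | h in [set h : {nnsfun T >-> R} | forall x, (h x)%:E <= f x]]
    <= ((p - m%:num * v) / k%:num)%:E.
  apply: ge_ereal_sup => _ [h hf <-].
  rewrite [((p - _) / _)%R]mulrC EFinM lee_pdivlMl// EFinB lee_suber_addr// EFinM.
  exact: cl.
apply: le_trans (leeD (lee_wpmul2l _ Qle) (lexx _)) _ => //.
by rewrite -!EFinM -EFinD lee_fin mulrC divfK ?gt_eqF// subrK.
Qed.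

Lemma core d (S : measurableType d) (R : realType)
  (nu : {charge set S -> \bar R}) (x : S) (mx : measurable [set x])
  (nu_off : forall G, measurable G -> 0 <= nu (G `\ x))
  (nuS : nu setT = 0) (c w : R) (c0 : (0 <= c)%R)
  (hw : 1 + c%:E + (- nu [set x]) <= w%:E)
  (V : S -> \bar R) (V1 : forall y, 1 <= V y) :
  let J := dual_adde (int_wrt (fun G => nu (G `\ x)) V) (- ((- nu [set x]) * V x)) in
  let U := ((w / (w - c))%:E * int_wrt (fun G => nu G * ((w)^-1)%:E + \d_x G) V) in
  (V x = +oo -> U = +oo) /\
  (forall v, V x = v%:E -> -oo < c%:E * V x + J /\
      U = V x + ((w - c)^-1)%:E * (c%:E * V x + J)).
Proof.
move=> J U.
have mCx : measurable (~` [set x]) by exact: measurableC.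
have nux : nu [set x] \is a fin_num by exact: fin_num_measure.
set r := (- fine (nu [set x]))%R.
have nuxE : nu [set x] = (- r)%:E by rewrite /r opprK fineK.
have r0 : (0 <= r)%R.
  have := nu_off _ measurableT.
  by rewrite chargeD// nuS setTI nuxE sub0e EFinN oppeK lee_fin.
move: hw; rewrite nuxE EFinN oppeK -!EFinD lee_fin => hw.
have w0 : (0 < w)%R by lra.
have wc : (1 <= w - c)%R by lra.
have wc0 : (0 < w - c)%R by lra.
have rw : (r < w)%R by lra.
have nu0 : forall X, measurable X -> 0 <= crestr nu mCx X.
  by move=> X mX; rewrite /crestr -setDE; exact: nu_off.
pose mu1 : {measure set S -> \bar R} := pmeas nu0.
have mu1E G : measurable G -> mu1 G = nu (G `\ x).
  by move=> mG; change (pmeas nu0 G = nu (G `\ x)); rewrite pmeasE// /crestr -setDE.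
have k0 : (0 <= w^-1)%R by rewrite invr_ge0 ltW.
have m0 : (0 <= 1 - r / w)%R by rewrite subr_ge0 ler_pdivrMr// mul1r ltW.
pose k := NngNum k0; pose mm := NngNum m0.
have kpos : (0 < k%:num)%R by rewrite /= invr_gt0.
have mpos : (0 < mm%:num)%R by rewrite /= subr_gt0 ltr_pdivrMr// mul1r.
pose mix := measure_add (mscale k mu1) (mscale mm \d_x).
have mixE G : measurable G -> mix G = nu G * ((w)^-1)%:E + \d_x G.
  move=> mG.
  have -> : mix G = (k%:num)%:E * nu (G `\ x) + (mm%:num)%:E * \d_x G.
    rewrite /mix measure_addE; congr (_ + _).
    exact: (congr1 (fun z => (k%:num)%:E * z) (mu1E G mG)).
  rewrite diracE /=.
  have := chargeD nu mG mx.
  have nGx : nu (G `\ x) \is a fin_num by apply: fin_num_measure; exact: measurableD.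
  have nG : nu G \is a fin_num by exact: fin_num_measure.
  rewrite -(fineK nGx) -(fineK nG).
  have [xG|xG] := boolP (x \in G).
    have -> : G `&` [set x] = [set x].
      by apply/seteqP; split => y /=; [case|move=> ->; split => //; exact/set_mem].
    rewrite nuxE => /(congr1 fine) /= ->.
    rewrite -!EFinM -!EFinD; congr EFin; ring.
  have -> : G `&` [set x] = set0.
    by apply/seteqP; split => y //= [Gy yx]; move: xG; rewrite -yx => /negP; apply; exact/mem_set.
  rewrite charge0 sube0 => /(congr1 fine) /= ->.
  by rewrite -!EFinM -!EFinD; congr EFin; ring.
have V0 y : 0 <= V y by apply: le_trans (V1 y).
have PE : int_wrt (fun G => nu G * ((w)^-1)%:E + \d_x G) V
    = (k%:num)%:E * integral mu1 setT V + (mm%:num)%:E * V x.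
  rewrite (@int_wrt_eq _ _ _ mix); last exact: mixE.
  exact: int_mix.
have IE : int_wrt (fun G => nu (G `\ x)) V = integral mu1 setT V.
  by apply: int_wrt_eq => G mG; rewrite mu1E.
have I0 : 0 <= integral mu1 setT V by apply: integral_ge0.
rewrite /U PE; rewrite /J IE nuxE.
case HI : (integral mu1 setT V) I0 => [i| |] // I0.
- split.
    move=> Vx; rewrite Vx (gt0_muley (x := (mm%:num)%:E)) ?lte_fin// addey//.
    by rewrite gt0_muley ?lte_fin ?divr_gt0.
  move=> v Vx; rewrite Vx /dual_adde /=.
  split; first by rewrite -EFinM -EFinD ltNyr.
  rewrite -!EFinM -EFinD; congr EFin.
  field.
  by apply/andP; split; rewrite gt_eqF.
- split.
    move=> Vx; rewrite Vx (gt0_muley (x := (mm%:num)%:E)) ?lte_fin// addey//.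
      by rewrite gt0_muley ?lte_fin ?divr_gt0.
    by rewrite gt0_muley ?lte_fin.
  move=> v Vx; rewrite Vx /dual_adde /=.
  split; first by rewrite addey.
  rewrite gt0_muley ?lte_fin// addye// gt0_muley ?lte_fin ?divr_gt0//.
  by rewrite addey// gt0_muley ?lte_fin ?invr_gt0// addey.
Qed.
Lemma key (A : Type) (R : realType) (v M : R) (F : A -> \bar R) (K : A -> R)
  (hF : forall a, -oo < F a) (hK0 : forall a, (0 < K a)%R)
  (hK1 : forall a, (K a <= 1)%R) (hM : (0 < M)%R) (hKM : forall a, (M <= K a)%R) :
  (0 = ereal_inf [set F a | a in [set: A]]) <->
  (v%:E = ereal_inf [set v%:E + (K a)%:E * F a | a in [set: A]]).
Proof.
split => [H0|Hv].
  have Fge0 a : 0 <= F a by rewrite H0; apply: ereal_inf_lbound; exists a.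
  apply/eqP; rewrite eq_le; apply/andP; split.
    apply/ereal_infP => _ [a _ <-]; apply: leeDl.
    by rewrite mule_ge0// lee_fin ltW.
  apply/lee_addgt0Pr => e e0.
  have : ereal_inf [set F a | a in [set: A]] < e%:E by rewrite -H0 lte_fin.
  case/ereal_inf_lt => _ [a _ <-] Fae.
  apply: le_trans (ereal_inf_lbound _) _; first by exists a.
  rewrite leeD2lE//; apply: le_trans (ltW Fae).
  rewrite -[leRHS]mul1e; apply: lee_wpmul2r => //.
  by rewrite lee_fin.
have Fge0 a : 0 <= F a.
  have : v%:E <= v%:E + (K a)%:E * F a by rewrite {1}Hv; apply: ereal_inf_lbound; exists a.
  have kp : 0 < (K a)%:E by rewrite lte_fin.
  by rewrite -[X in X <= _]adde0 leeD2lE// (pmule_rge0 _ kp).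
apply/eqP; rewrite eq_le; apply/andP; split.
  by apply/ereal_infP => _ [a _ <-]; exact: Fge0.
apply/lee_addgt0Pr => e e0; rewrite add0e.
have : ereal_inf [set v%:E + (K a)%:E * F a | a in [set: A]] < (v + M * e)%:E.
  by rewrite -Hv lte_fin ltrDl mulr_gt0.
case/ereal_inf_lt => _ [a _ <-]; rewrite EFinD lteD2lE// => HK.
apply: le_trans (ereal_inf_lbound _) _; first by exists a.
move: HK (hF a) (Fge0 a); case: (F a) => [f| |] //.
  rewrite -EFinM !lte_fin lee_fin => HK _ f0.
  rewrite lee_fin; have := hK0 a; have := hKM a; nra.
by rewrite gt0_muley ?lte_fin// ltNge leey.
Qed.
Lemma qx_ge0 d (S : measurableType d) (R : realType)
  (nu : {charge set S -> \bar R}) (x : S) (mx : measurable [set x])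
  (nu_off : forall G, measurable G -> 0 <= nu (G `\ x))
  (nuS : nu setT = 0) : 0 <= - nu [set x].
Proof.
have := nu_off _ measurableT.
by rewrite chargeD// nuS setTI sub0e.
Qed.

Theorem lemma5p8 (R : realType) (d1 d2 : measure_display)
  (S : measurableType d1) (A : measurableType d2)
  (S_borel : borel_space S) (A_borel : borel_space A)
  (S_ne : inhabited S) (A_ne : inhabited A)
  (q : S -> A -> {charge set S -> \bar R})
  (q_ker : forall G : set S, measurable G ->
     measurable_fun [set: S * A] (fun xa : S * A => q xa.1 xa.2 G))
  (q_off : forall x a (G : set S), measurable G -> 0 <= q x a (G `\ x))
  (q_cons : forall x a, q x a [set: S] = 0)
  (q_bdd : forall x, ereal_sup [set qx q x a | a in [set: A]] < +oo)
  (c : S -> A -> R)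
  (c_ge0 : forall x a, (0 <= c x a)%R)
  (c_meas : measurable_fun [set: S * A] (fun xa : S * A => c xa.1 xa.2))
  (c_bdd : forall x, ereal_sup [set (c x a)%:E | a in [set: A]] < +oo)
  (w : S -> R)
  (w_meas : measurable_fun [set: S] w)
  (w_ge1 : forall x, (1 <= w x)%R)
  (w_dom : forall x, 1 + ereal_sup [set (c x a)%:E | a in [set: A]]
                       + ereal_sup [set qx q x a | a in [set: A]] <= (w x)%:E) :
  (* (a) *)
  (forall V : S -> \bar R, (forall x, 1 <= V x) -> lower_semianalytic V ->
     ((forall x, V x < +oo ->
         0 = ereal_inf [set (c x a)%:E * V x + qint q x a V | a in [set: A]])
      <->
      (forall x, V x = ereal_inf [set ((w x) / (w x - c x a))%:E * ptint q w x a V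
                                   | a in [set: A]])))
  /\
  (* (b) *)
  (forall V : S -> \bar R, (forall x, 1 <= V x) -> lower_semianalytic V ->
     (forall x, V x < +oo ->
         0 = ereal_inf [set (c x a)%:E * V x + qint q x a V | a in [set: A]]) ->
     forall phi : S -> A, measurable_fun [set: S] phi ->
     ((forall x, V x < +oo ->
         0 = ereal_inf [set (c x a)%:E * V x + qint q x a V | a in [set: A]] /\
         ereal_inf [set (c x a)%:E * V x + qint q x a V | a in [set: A]]
           = (c x (phi x))%:E * V x + qint q x (phi x) V)
      <->
      (forall x, ereal_inf [set ((w x) / (w x - c x a))%:E * ptint q w x a V
                            | a in [set: A]]
                 = ((w x) / (w x - c x (phi x)))%:E * ptint q w x (phi x) V))).
Proof.
have mx x : measurable [set x] := @borel_point _ _ S_borel x.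
have hw x a : 1 + (c x a)%:E + (- q x a [set x]) <= (w x)%:E.
  apply: le_trans (w_dom x); apply: leeD; [apply: leeD => //|];
    by apply: ereal_sup_ubound; exists a.
have hwr x a : (1 + c x a <= w x)%R.
  rewrite -lee_fin EFinD; apply: le_trans (hw x a); apply: leeDl.
  exact: (@qx_ge0 _ _ _ (q x a) x (mx x) (q_off x a) (q_cons x a)).
have C x a V (V1 : forall y, 1 <= V y) :
  (V x = +oo -> ((w x) / (w x - c x a))%:E * ptint q w x a V = +oo) /\
  (forall v, V x = v%:E -> -oo < (c x a)%:E * V x + qint q x a V /\
      ((w x) / (w x - c x a))%:E * ptint q w x a V
      = V x + ((w x - c x a)^-1)%:E * ((c x a)%:E * V x + qint q x a V)).
  exact: (@core _ _ _ (q x a) x (mx x) (q_off x a) (q_cons x a) _ _ (c_ge0 x a) (hw x a) V V1).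
have K0 x a : (0 < (w x - c x a)^-1)%R.
  by rewrite invr_gt0; have := hwr x a; have := c_ge0 x a; lra.
have K1 x a : ((w x - c x a)^-1 <= 1)%R.
  move: (hwr x a) (c_ge0 x a) => h1 h2.
  have h3 : (0 < w x - c x a)%R by lra.
  by rewrite invf_le1//; lra.
have M0 x : (0 < (w x)^-1)%R by rewrite invr_gt0; have := w_ge1 x; lra.
have KM x a : ((w x)^-1 <= (w x - c x a)^-1)%R.
  move: (hwr x a) (c_ge0 x a) => h1 h2.
  have h3 : (0 < w x - c x a)%R by lra.
  have h4 : (0 < w x)%R by lra.
  by rewrite lef_pV2 ?posrE//; lra.
have partA V (V1 : forall y, 1 <= V y) :
    ((forall x, V x < +oo ->
         0 = ereal_inf [set (c x a)%:E * V x + qint q x a V | a in [set: A]])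
      <->
      (forall x, V x = ereal_inf [set ((w x) / (w x - c x a))%:E * ptint q w x a V
                                   | a in [set: A]])).
  split => H x.
    case Vx : (V x) => [v| |].
    - rewrite (eq_imagel (f' := fun a => v%:E + ((w x - c x a)^-1)%:E *
               ((c x a)%:E * V x + qint q x a V))); last first.
        by move=> a _; rewrite ((C x a V V1).2 v Vx).2 Vx.
      have hF a : -oo < (c x a)%:E * V x + qint q x a V.
        exact: ((C x a V V1).2 v Vx).1.
      apply/(@key A R v _ _ (fun a => (w x - c x a)^-1)%R hF (K0 x) (K1 x) (M0 x) (KM x)).
      by apply: H; rewrite Vx ltry.
    - apply/eqP; rewrite eq_le leey andbT; apply/ereal_infP => _ [a _ <-].
      by rewrite ((C x a V V1).1 Vx).
    - by have := V1 x; rewrite Vx.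
  move=> Vfin; case Vx : (V x) Vfin => [v| |] //; last by have := V1 x; rewrite Vx.
  move=> _; have := H x; rewrite Vx.
  rewrite (eq_imagel (f' := fun a => v%:E + ((w x - c x a)^-1)%:E *
               ((c x a)%:E * V x + qint q x a V))); last first.
    by move=> a _; rewrite ((C x a V V1).2 v Vx).2 Vx.
  rewrite Vx.
  have hF a : -oo < (c x a)%:E * v%:E + qint q x a V.
    by rewrite -Vx; exact: ((C x a V V1).2 v Vx).1.
  by move/(@key A R v _ _ (fun a => (w x - c x a)^-1)%R hF (K0 x) (K1 x) (M0 x) (KM x)).
split; first by move=> V V1 _; exact: partA.
move=> V V1 _ Hs phi _.
have Va := (partA V V1).1 Hs.
split => H x.
  rewrite -Va.
  case Vx : (V x) => [v| |].
  - have [H0 Hp] := H x ltac:(by rewrite Vx ltry).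
    rewrite ((C x (phi x) V V1).2 v Vx).2 -Hp -H0 mule0 adde0 Vx //.
  - by rewrite ((C x (phi x) V V1).1 Vx).
  - by have := V1 x; rewrite Vx.
move=> Vfin; split; first exact: Hs.
rewrite -(Hs x Vfin).
case Vx : (V x) Vfin => [v| |] //; last by have := V1 x; rewrite Vx.
move=> _; have := H x; rewrite -Va ((C x (phi x) V V1).2 v Vx).2 Vx.
have := ((C x (phi x) V V1).2 v Vx).1; rewrite Vx.
case: ((c x (phi x))%:E * v%:E + qint q x (phi x) V) => [t| |] // _.
  rewrite -EFinM -EFinD => /(congr1 fine) /= /eqP.
  rewrite -subr_eq0 opprD addrA subrr sub0r oppr_eq0 mulf_eq0 invr_eq0.
  case/orP => /eqP H0; last by rewrite H0.
  by move: (K0 x (phi x)); rewrite H0 invr0 ltxx.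
by rewrite gt0_muley ?lte_fin// addey.
Qed.
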